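(* Let $\mathbf{u}=(u_n)$ be an a-sequence with $q_\mathbf{u}<\infty$. Let $S=\{n_1<n_2<\cdots<n_k<\cdots\}$ be an infinite subset of $S^*_\mathbf{u}$ such that $d_i:=n_{i+1}-n_i\ge 2$ for all $i\ge1$, and let $$x_S=\frac{1}{u_{n_1}}-\frac{1}{u_{n_2}}+\frac{1}{u_{n_3}}-\frac{1}{u_{n_4}}+\cdots \in\mathbb{T}.$$ Then: (a) if $n_k\le n<n_{k+1}$, then $\|u_{n-1}x_S\|\le\|u_{n_k-1}x_S\|$, and $$\frac{1}{q_\mathbf{u}}-\frac{1}{2^{d_k-1}q_\mathbf{u}^2}\le\frac{1}{q_{n_k}}-\frac{1}{q_{n_k}\cdots q_{n_{k+1}}}\le\|u_{n_k-1}x_S\|\le\frac{1}{q_{n_k}}-\frac{1}{q_{n_k}\cdots q_{n_{k+1}}}+\frac{1}{q_{n_k}\cdots q_{n_{k+2}}};$$ (b) $\varrho_\mathbf{u}(x_S,0)=\max\{\|x_S\|,\ \sup_{k\in\mathbb{N}}\|u_{n_k-1}x_S\|\}$; (c) if $S'\neq S$ is another set with the same properties as $S$, then $x_S\neq x_{S'}$.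
   Context: An a-sequence is a strictly increasing sequence of integers $\mathbf{u}=(u_n)_{n\in\mathbb{N}}$ with $u_n\mid u_{n+1}$ for all $n$. Its ratios are $q_0=u_0$ and $q_n=u_n/u_{n-1}$ ($n>0$); $q_\mathbf{u}=\limsup_n q_n$ and $S^*_\mathbf{u}=\{m\in\mathbb{N}: q_m=q_\mathbf{u}\}$. $\mathbb{T}=\mathbb{R}/\mathbb{Z}$, $\|x\|$ is the distance from $x$ to the nearest integer, $d(x,y)=\|x-y\|$, and $\varrho_\mathbf{u}(x,y)=\sup_n\max\{d(x,y),d(u_nx,u_ny)\}$ on $\mathbb{T}$. *)

(* Defs.v *)
From HB Require Import structures.
From mathcomp Require Import all_boot all_order all_algebra.
From mathcomp Require Import all_classical all_reals all_analysis.
Set Implicit Arguments. Unset Strict Implicit. Unset Printing Implicit Defensive.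
Import Order.TTheory GRing.Theory Num.Theory numFieldNormedType.Exports.
Local Open Scope ring_scope.

(* a-sequence: strictly increasing integers with u_n | u_(n+1).
   (Such a sequence is necessarily positive, so we take values in nat.) *)
Definition a_sequence (u : nat -> nat) : Prop :=
  (0 < u 0)%N /\ (forall n, u n < u n.+1)%N /\ (forall n, (u n %| u n.+1)%N).

Definition aratio (u : nat -> nat) (n : nat) : nat :=
  if n is m.+1 then (u n %/ u m)%N else u 0.

(* u_(m-1), with the convention u_(-1) = 1 *)
Definition u_pred (u : nat -> nat) (m : nat) : nat :=
  if m is m'.+1 then u m' else 1%N.

Definition q_limsup (R : realType) (u : nat -> nat) : \bar R :=
  limn_esup (fun n => ((aratio u n)%:R : R)%:E).

Definition Sstar (R : realType) (u : nat -> nat) : set nat :=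
  [set m | ((aratio u m)%:R : R)%:E = q_limsup R u].

Definition tnorm (R : realType) (x : R) : R :=
  Num.min (x - (Num.floor x)%:~R) ((Num.floor x + 1)%:~R - x).

Definition tdist (R : realType) (x y : R) : R := tnorm (x - y).

Definition rho (R : realType) (u : nat -> nat) (x y : R) : R :=
  sup (range (fun n => Num.max (tdist x y) (tdist ((u n)%:R * x) ((u n)%:R * y)))).

(* S = {n_1 < n_2 < ...} given by its increasing enumeration ns (ns k = n_(k+1));
   admissible: S subset of S*_u, gaps d_i >= 2 (hence strictly increasing, infinite) *)
Definition admissible (R : realType) (u : nat -> nat) (ns : nat -> nat) : Prop :=
  (forall k, Sstar R u (ns k)) /\ (forall k, (ns k + 2 <= ns k.+1)%N).

(* x_S = 1/u_{n_1} - 1/u_{n_2} + 1/u_{n_3} - ... (a real representative) *)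
Definition xS (R : realType) (u : nat -> nat) (ns : nat -> nat) : R :=
  limn (series (fun k => (-1) ^+ k / ((u (ns k))%:R : R))).

(* Main.v *)
Require Import Defs.
From HB Require Import structures.
From mathcomp Require Import all_boot all_order all_algebra.
From mathcomp Require Import all_classical all_reals all_analysis.
From mathcomp Require Import zify ring lra.
Import Order.TTheory GRing.Theory Num.Theory numFieldNormedType.Exports.
Set Implicit Arguments. Unset Strict Implicit.
Local Open Scope ring_scope.
Local Open Scope nat_scope.



Lemma a_pos u : a_sequence u -> forall n, (0 < u n)%N.
Proof. move=> [h0 [hi _]]; elim=> // n IH; exact: ltn_trans IH (hi n). Qed.

Lemma a_upred_ratio u : a_sequence u -> forall n, (u_pred u n * aratio u n)%N = u n.
Proof.
move=> hu [|n] /=; first by rewrite mul1n.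
case: hu => _ [_ hd]; by rewrite mulnC divnK.
Qed.

Lemma a_ratio_pos u : a_sequence u -> forall n, (0 < aratio u n)%N.
Proof.
move=> hu n; have := a_pos hu n; rewrite -(a_upred_ratio hu n) muln_gt0.
by case/andP.
Qed.

Lemma a_ratio_ge2 u : a_sequence u -> forall n, (0 < n)%N -> (2 <= aratio u n)%N.
Proof.
move=> hu [|n] // _; have E := a_upred_ratio hu n.+1; rewrite /= in E.
have h0 := a_pos hu n; case: hu => _ [hi _]; have := hi n; rewrite -E /=.
move: (u n.+1 %/ u n)%N => [|[|r]] //; rewrite ?muln0 ?muln1 ?ltnn //.
Qed.

Lemma a_dvd u : a_sequence u -> forall a b, (a <= b)%N -> (u a %| u b)%N.
Proof.
move=> hu a b /subnK <-; elim: (b - a)%N => [|k IH]; first by rewrite add0n.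
rewrite addSn; apply: dvdn_trans IH _; by case: hu => _ [_ ].
Qed.

Lemma a_prod u : a_sequence u -> forall m L,
  (u_pred u m * \prod_(m <= i < (m + L).+1) aratio u i)%N = u (m + L).
Proof.
move=> hu m; elim=> [|L IH].
  by rewrite !addn0 big_nat1 (a_upred_ratio hu).
rewrite addnS big_nat_recr /=; last by lia.
rewrite mulnA IH; exact: (a_upred_ratio hu (m + L).+1).
Qed.

Lemma a_pow2 u : a_sequence u -> forall n, (2 ^ n <= u n)%N.
Proof.
move=> hu; elim=> [|n IH]; first by have := a_pos hu 0.
rewrite -(a_upred_ratio hu n.+1) expnS mulnC; apply: leq_mul; first exact: IH.
exact: a_ratio_ge2.
Qed.

Lemma prod_pow2 u : a_sequence u -> forall a L, (0 < a)%N ->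
  (2 ^ L <= \prod_(a <= i < a + L) aratio u i)%N.
Proof.
move=> hu a; elim=> [|L IH] ha; first by rewrite addn0 big_geq.
rewrite addnS big_nat_recr /= ?leq_addr // expnS mulnC; apply: leq_mul; first exact: IH.
apply: a_ratio_ge2 => //; exact: leq_trans ha (leq_addr _ _).
Qed.

Lemma prod_ge1 u : a_sequence u -> forall a b, (0 < \prod_(a <= i < b) aratio u i)%N.
Proof. move=> hu a b; rewrite prodn_gt0 // => i; exact: a_ratio_pos. Qed.

Lemma prod_two u : a_sequence u -> forall a c b, (a <= c)%N -> (c < b)%N ->
  (aratio u c * aratio u b <= \prod_(a <= i < b.+1) aratio u i)%N.
Proof.
move=> hu a c [//|b] hac hcb.
rewrite (big_cat_nat hac) /=; last by lia.
rewrite big_nat_recr /=; last by lia.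
rewrite big_nat_recl /=; last by lia.
have h1 := prod_ge1 hu a c.
have h2 : (0 < \prod_(c <= i < b) aratio u i.+1)%N.
  by rewrite prodn_gt0 // => i; exact: a_ratio_pos.
move: h1 h2; move: (\prod_(a <= i < c) aratio u i) (\prod_(c <= i < b) aratio u i.+1) => p q hp hq.
move: (aratio u c) (u b.+1 %/ u b) => x y.
apply: leq_trans (leq_pmull _ hp). rewrite -mulnA leq_mul2l; apply/orP; right; exact: leq_pmull.
Qed.

Lemma P1_bound u : a_sequence u -> forall a b, (a + 2 <= b)%N ->
  (aratio u a * aratio u b * 2 ^ (b - a).-1 <= \prod_(a <= i < b.+1) aratio u i)%N.
Proof.
move=> hu a b hab.
rewrite (@big_cat_nat _ _ _ a.+1) /=; [|lia|lia].
rewrite big_nat1 big_nat_recr /=; last by lia.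
have := @prod_pow2 u hu (a.+1) ((b - a).-1) (ltn0Sn a).
rewrite (_ : (a.+1 + (b - a).-1)%N = b); last by lia.
move: (\prod_(a.+1 <= i < b) aratio u i) => p hp.
rewrite mulnA [X in (_ <= X)]mulnC mulnA [X in (_ <= X * _)]mulnC.
by apply: leq_mul.
Qed.

Lemma P2_bound u : a_sequence u -> forall m b, (m < b)%N ->
  (0 < m \/ 2 <= aratio u m)%N ->
  (2 * aratio u b <= \prod_(m <= i < b.+1) aratio u i)%N.
Proof.
move=> hu m b hmb [h|h].
- apply: leq_trans (prod_two hu (c := b.-1) _ _); last by lia.
  + rewrite leq_mul2r; apply/orP; right; apply: a_ratio_ge2 => //; lia.
  + lia.
- apply: leq_trans (prod_two hu (c := m) _ _) => //.
  by rewrite leq_mul2r h orbT.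
Qed.

Local Open Scope nat_scope.
Local Open Scope classical_set_scope.
Local Open Scope ring_scope.


Lemma alt_fin (R : realType) (f : nat -> R) :
  (forall i, 0 <= f i) -> (forall i, f i.+1 <= f i) ->
  forall L, 0 <= \sum_(0 <= i < L) (-1) ^+ i * f i <= f 0%N.
Proof.
move=> h0 hd L; elim: L f h0 hd => [|L IH] f h0 hd.
  by rewrite big_geq // lexx h0.
rewrite big_nat_recl //= expr0 mul1r.
under eq_bigr do rewrite exprS mulN1r mulNr.
rewrite sumrN.
have /andP[h1 h2] := IH (fun i => f i.+1) (fun i => h0 i.+1) (fun i => hd i.+1).
apply/andP; split; first by have := hd 0%N; lra.
by lra.
Qed.

Definition G (R : realType) (f : nat -> R) N M :=
  \sum_(0 <= i < M) (-1) ^+ i * f (N + i)%N.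

Lemma G_step (R : realType) (f : nat -> R) N M :
  G f N M.+2 = f N - f N.+1 + G f N.+2 M.
Proof.
rewrite /G big_nat_recl // big_nat_recl //= expr0 mul1r expr1 mulN1r addn0.
rewrite addrA; congr (_ + _); first by rewrite addn1.
by apply: eq_bigr => i _; rewrite !exprS !mulN1r opprK 2!addnS 2!addSn.
Qed.

Lemma G_series (R : realType) (f : nat -> R) N M :
  series (fun k => (-1) ^+ k * f k) (N + M)%N - series (fun k => (-1) ^+ k * f k) N
  = (-1) ^+ N * G f N M.
Proof.
elim: M => [|M IH]; first by rewrite addn0 subrr /G big_geq // mulr0.
rewrite addnS seriesSr /G big_nat_recr //= -/(G f N M).
rewrite addrAC IH mulrDr exprD mulrA.
done.
Qed.

Lemma alt_tail (R : realType) (f : nat -> R) :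
  (forall i, 0 <= f i) -> (forall i, f i.+1 <= f i) ->
  cvgn (series (fun k => (-1) ^+ k * f k)) ->
  forall N, let t := (-1) ^+ N * (limn (series (fun k => (-1) ^+ k * f k))
                    - series (fun k => (-1) ^+ k * f k) N) in
   [/\ f N - f N.+1 <= t, t <= f N - f N.+1 + f N.+2, 0 <= t & t <= f N].
Proof.
move=> h0 hd hc N t.
set s := series _ in hc t *.
have cv : [sequence G f N M.+2]_M @ \oo --> t.
  have e : (fun M => G f N M.+2) = (fun M => (-1) ^+ N * (s (M.+2 + N)%N - s N)).
    apply: funext => M; rewrite addnC G_series mulrA -exprMn mulrNN mulr1 expr1n mul1r //.
  rewrite e /t; apply: cvgMl_tmp.
  apply: cvgB; last exact: cvg_cst.
  rewrite (_ : (fun x => s (x.+2 + N)%N) = [sequence s (n + N.+2)%N]_n); last first.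
    by apply: funext => n /=; rewrite addSn addnS addSn addnS.
  rewrite cvg_shiftn; exact: hc.
have tE : limn (fun M => G f N M.+2) = t by apply: cvg_lim.
have hb : forall M, f N - f N.+1 <= G f N M.+2 <= f N - f N.+1 + f N.+2.
  move=> M; rewrite G_step.
  have hd' : forall i, f (N.+2 + i.+1)%N <= f (N.+2 + i)%N.
    by move=> i; rewrite addnS; exact: hd.
  have := @alt_fin R (fun i => f (N.+2 + i)%N) (fun i => h0 _) hd' M.
  rewrite addn0 /G => /andP[a b]; apply/andP; split; lra.
have c1 : cvgn (fun M => G f N M.+2) by apply/cvg_ex; exists t.
have l1 : f N - f N.+1 <= t.
  rewrite -tE; apply: limr_ge => //; apply: nearW => M; by case/andP: (hb M).
have l2 : t <= f N - f N.+1 + f N.+2.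
  rewrite -tE; apply: limr_le => //; apply: nearW => M; by case/andP: (hb M).
have := hd N; have := hd N.+1; have := h0 N.+1.
split => //; lra.
Qed.


Lemma int_split (R : realType) (k n : int) :
  k = n \/ (k%:~R <= n%:~R - 1 :> R) \/ (n%:~R + 1 <= k%:~R :> R).
Proof.
have [h|h|h] := ltgtP k n; last by left.
- right; left; rewrite -[1]/(1%:~R) -intrB ler_int; lia.
- right; right; rewrite -[1]/(1%:~R) -intrD ler_int; lia.
Qed.

Lemma tnorm_le (R : realType) (w : R) (n : int) : tnorm w <= `|w - n%:~R|.
Proof.
rewrite /tnorm; have h1 := floor_le w; have h2 := floorD1_gt w.
move: h1 h2; rewrite intrD; set m := Num.floor w => h1 h2.
change ((1:int)%:~R : R) with (1:R) in h2.
have [h|[h|h]] := int_split R n m.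
- by rewrite h ge_min ger0_norm ?lexx // subr_ge0.
- by rewrite ge_min ger0_norm; [apply/orP; left; lra| lra].
- by rewrite ge_min ler0_norm; [apply/orP; right; lra| lra].
Qed.

Lemma tnorm_eq (R : realType) (w : R) (n : int) :
  `|w - n%:~R| <= 2^-1 -> tnorm w = `|w - n%:~R|.
Proof.
move=> hn; apply/eqP; rewrite eq_le tnorm_le /=.
move: hn; rewrite ler_norml => /andP[a b].
rewrite /tnorm; have h1 := floor_le w; have h2 := floorD1_gt w.
move: h1 h2; rewrite intrD; set m := Num.floor w => h1 h2.
change ((1:int)%:~R : R) with (1:R) in h2.
have [h|[h|h]] := int_split R n m.
- rewrite h in a b *; rewrite le_min ger0_norm; last by lra.
  apply/andP; split; lra.
- rewrite le_min; apply/andP; split; rewrite ler_norml; apply/andP; split; lra.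
- have [e|[e|e]] := int_split R n (m + 1); rewrite ?intrD in e.
  + rewrite e intrD in a b *; change ((1:int)%:~R : R) with (1:R) in a; change ((1:int)%:~R : R) with (1:R) in b; change ((1:int)%:~R : R) with (1:R).
    rewrite le_min; apply/andP; split; rewrite ler_norml; apply/andP; split; lra.
  + change ((1:int)%:~R : R) with (1:R) in e.
    rewrite le_min; apply/andP; split; rewrite ler_norml; apply/andP; split; lra.
  + change ((1:int)%:~R : R) with (1:R) in e.
    rewrite le_min; apply/andP; split; rewrite ler_norml; apply/andP; split; lra.
Qed.

Lemma tnorm_ge0 (R : realType) (w : R) : 0 <= tnorm w.
Proof.
rewrite /tnorm; have h1 := floor_le w; have h2 := floorD1_gt w.
move: h1 h2; rewrite intrD => h1 h2; change ((1:int)%:~R : R) with (1:R) in h2; rewrite le_min; apply/andP; split; lra.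
Qed.

Lemma tnorm_le_half (R : realType) (w : R) : tnorm w <= 2^-1.
Proof.
rewrite /tnorm; have h1 := floor_le w; have h2 := floorD1_gt w.
move: h1 h2; rewrite intrD => h1 h2; change ((1:int)%:~R : R) with (1:R) in h2; rewrite ge_min.
case: (lerP (w - (Num.floor w)%:~R) (2^-1)) => h; first by apply/orP; left.
apply/orP; right; lra.
Qed.


Lemma ns_ge (R : realType) u ns : admissible R u ns -> forall k, (k <= ns k)%N.
Proof. move=> [_ h]; elim=> // k IH; have := h k; lia. Qed.

Lemma ns_lt (R : realType) u ns : admissible R u ns -> forall k l, (k < l)%N -> (ns k < ns l)%N.
Proof.
move=> [_ h] k l /subnK <-; elim: (l - k.+1)%N => [|n IH].
  by rewrite add0n; have := h k; lia.
by rewrite addSn; have := h (n + k.+1)%N; lia.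
Qed.

Lemma ns_le (R : realType) u ns : admissible R u ns -> forall k l, (k <= l)%N -> (ns k <= ns l)%N.
Proof.
move=> ha k l; rewrite leq_eqVlt => /orP[/eqP -> //|h].
by apply: ltnW; apply: ns_lt ha _ _ h.
Qed.

Lemma u_mono u : a_sequence u -> forall a b, (a <= b)%N -> (u a <= u b)%N.
Proof.
move=> hu a b h; apply: dvdn_leq; [exact: a_pos|exact: a_dvd].
Qed.

Lemma Q_facts (R : realType) u ns : a_sequence u -> admissible R u ns ->
  exists Qn : nat, [/\ (2 <= Qn)%N, fine (q_limsup R u) = Qn%:R
     & forall k, aratio u (ns k) = Qn].
Proof.
move=> hu ha; exists (aratio u (ns 0%N)).
have e : forall k, aratio u (ns k) = aratio u (ns 0%N).
  move=> k; case: ha => hs _; have h1 := hs k; have h2 := hs 0%N.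
  rewrite /Sstar /= -h2 in h1; have := EFin_inj h1; move/eqP; rewrite eqr_nat => /eqP //.
split => //.
- rewrite -(e 1%N); apply: a_ratio_ge2 => //; have := ns_ge ha 1; lia.
- by case: ha => hs _; have := hs 0%N; rewrite /Sstar /= => <-.
Qed.

Definition fs (R : realType) (u ns : nat -> nat) (k : nat) : R := ((u (ns k))%:R)^-1.

Lemma fs_pos (R : realType) u ns : a_sequence u -> forall k, 0 < fs R u ns k.
Proof. by move=> hu k; rewrite /fs invr_gt0 ltr0n; apply: a_pos. Qed.

Lemma fs_dec (R : realType) u ns : a_sequence u -> admissible R u ns ->
  forall k, fs R u ns k.+1 <= fs R u ns k.
Proof.
move=> hu ha k; rewrite /fs lef_pV2 ?posrE ?ltr0n ?a_pos // ler_nat.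
by apply: u_mono => //; apply: ns_le ha _ _ (leqnSn _).
Qed.

Lemma fs_cvg (R : realType) u ns : a_sequence u -> admissible R u ns ->
  cvgn (series (fun k => (-1) ^+ k * fs R u ns k)).
Proof.
move=> hu ha; apply: normed_cvg.
rewrite (_ : [normed series _] = series (fs R u ns)); last first.
  apply: funext => n /=; apply: eq_bigr => k _.
  by rewrite normrM normrX normrN normr1 expr1n mul1r ger0_norm // ltW // fs_pos.
apply: (@series_le_cvg R _ (geometric 1 (2^-1))).
- by move=> n; apply: ltW; apply: fs_pos.
- by move=> n; apply: geometric_ge0.
- move=> n; rewrite /geometric /= mul1r /fs exprVn lef_pV2 ?posrE ?ltr0n ?a_pos ?exprn_gt0 //.
  rewrite -natrX ler_nat; apply: leq_trans (a_pow2 hu _).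
  by rewrite leq_exp2l //; apply: ns_ge ha n.
- apply: is_cvg_geometric_series; rewrite ger0_norm //; lra.
Qed.


Definition Ss (R : realType) (u ns : nat -> nat) : R ^nat :=
  series (fun k => (-1) ^+ k * fs R u ns k).

Definition ts (R : realType) (u ns : nat -> nat) (N : nat) : R :=
  (-1) ^+ N * (xS R u ns - Ss R u ns N).

Lemma xS_E (R : realType) u ns : xS R u ns = limn (Ss R u ns).
Proof. by []. Qed.

Lemma ts_bounds (R : realType) u ns : a_sequence u -> admissible R u ns ->
  forall N, let f := fs R u ns in let t := ts R u ns N in
  [/\ f N - f N.+1 <= t, t <= f N - f N.+1 + f N.+2, 0 <= t & t <= f N].
Proof.
move=> hu ha N f t.
have := @alt_tail R (fs R u ns) (fun i => ltW (fs_pos R ns hu i)) (fs_dec hu ha) (fs_cvg hu ha) N.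
by [].
Qed.

Lemma upred_pos u : a_sequence u -> forall m, (0 < u_pred u m)%N.
Proof. by move=> hu [|m] //=; apply: a_pos. Qed.

Lemma int_part (R : realType) u ns : a_sequence u -> forall m j0,
  (forall j, (j < j0)%N -> (ns j < m)%N) ->
  (u_pred u m)%:R * Ss R u ns j0 \is a Num.int.
Proof.
move=> hu m; elim=> [|j IH] hj.
  by rewrite /Ss /series /= big_geq // mulr0 rpred0.
rewrite /Ss seriesSr mulrDr rpredD //.
  by apply: IH => i hi; apply: hj; lia.
have hjm := hj j (ltnSn j).
have hd : (u (ns j) %| u_pred u m)%N.
  by move: hjm; case: (m) => // m0 hjm0 /=; apply: a_dvd => //; lia.
rewrite -(divnK hd) natrM /fs mulrCA mulrA.
rewrite -mulrA mulfK; last by rewrite pnatr_eq0 -lt0n a_pos.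
rewrite rpredM //; last exact: natr_int.
by rewrite rpredX // rpredN rpred1.
Qed.

Lemma decomp (R : realType) u ns m j0 :
  (u_pred u m)%:R * xS R u ns =
  (u_pred u m)%:R * Ss R u ns j0 + (-1) ^+ j0 * ((u_pred u m)%:R * ts R u ns j0).
Proof.
rewrite /ts; set c := (u_pred u m)%:R; set sg := (-1) ^+ j0.
have ss : sg * sg = 1 by rewrite /sg -exprMn mulrNN mulr1 expr1n.
have -> : sg * (c * (sg * (xS R u ns - Ss R u ns j0))) = c * (xS R u ns - Ss R u ns j0).
  by rewrite mulrCA [sg * (sg * _)]mulrA ss mul1r.
by rewrite mulrBr addrC subrK.
Qed.

Lemma c_fs (R : realType) u ns : a_sequence u -> forall m j, (m <= ns j)%N ->
  (u_pred u m)%:R * fs R u ns j = ((\prod_(m <= i < (ns j).+1) aratio u i)%:R)^-1.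
Proof.
move=> hu m j hmj; have := a_prod hu m (ns j - m); rewrite subnKC // => E.
rewrite /fs -E natrM invfM mulrA divff ?mul1r // pnatr_eq0 -lt0n; exact: upred_pos.
Qed.

Lemma UB (R : realType) u ns : a_sequence u -> admissible R u ns -> forall m j0,
  (forall j, (j < j0)%N -> (ns j < m)%N) -> (m <= ns j0)%N ->
  tnorm ((u_pred u m)%:R * xS R u ns) <=
    ((\prod_(m <= i < (ns j0).+1) aratio u i)%:R)^-1.
Proof.
move=> hu ha m j0 hj hm.
have [h1 _ h3 _] := ts_bounds hu ha j0.
have hc : 0 <= ((u_pred u m)%:R : R) by [].
apply: le_trans (tnorm_le _ (Num.floor ((u_pred u m)%:R * Ss R u ns j0))) _.
rewrite floorK; last exact: int_part.
rewrite (@decomp R u ns m j0) addrAC subrr add0r normrM normrX normrN normr1 expr1n mul1r.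
rewrite ger0_norm; last by apply: mulr_ge0.
rewrite -c_fs //; apply: ler_wpM2l => //.
have [_ _ _ h4] := ts_bounds hu ha j0; exact: h4.
Qed.

Lemma LB (R : realType) u ns : a_sequence u -> admissible R u ns ->
  forall (Qn : nat), (2 <= Qn)%N -> (forall k, aratio u (ns k) = Qn) ->
  forall k,
  ((Qn%:R : R)^-1 - ((\prod_(ns k <= i < (ns k.+1).+1) aratio u i)%:R)^-1
     <= tnorm ((u_pred u (ns k))%:R * xS R u ns)) /\
  (tnorm ((u_pred u (ns k))%:R * xS R u ns) <=
     (Qn%:R : R)^-1 - ((\prod_(ns k <= i < (ns k.+1).+1) aratio u i)%:R)^-1
     + ((\prod_(ns k <= i < (ns k.+2).+1) aratio u i)%:R)^-1).
Proof.
move=> hu ha Qn hQ2 hQ k.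
have [h1 h2 h3 h4] := ts_bounds hu ha k.
set c : R := (u_pred u (ns k))%:R.
have hc : 0 <= c by [].
have hj : forall j, (j < k)%N -> (ns j < ns k)%N by move=> j; exact: (ns_lt ha).
have e0 : c * fs R u ns k = (Qn%:R)^-1.
  by rewrite /c c_fs // big_nat1 hQ.
have e1 : c * fs R u ns k.+1 = ((\prod_(ns k <= i < (ns k.+1).+1) aratio u i)%:R)^-1.
  by rewrite /c c_fs //; apply: ns_le ha _ _ (leqnSn _).
have e2 : c * fs R u ns k.+2 = ((\prod_(ns k <= i < (ns k.+2).+1) aratio u i)%:R)^-1.
  rewrite /c c_fs //; exact: (ns_le ha (leq_trans (leqnSn k) (leqnSn k.+1))).
have hQh : (Qn%:R : R)^-1 <= 2^-1.
  by rewrite lef_pV2 ?posrE ?ltr0n // ?ler_nat //; lia.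
have tE : tnorm (c * xS R u ns) = c * ts R u ns k.
  have hi := int_part R hu hj.
  rewrite (@decomp R u ns (ns k) k) -/c.
  rewrite (tnorm_eq (n := Num.floor (c * Ss R u ns k))).
  - rewrite floorK // addrAC subrr add0r normrM normrX normrN normr1 expr1n mul1r.
    by rewrite ger0_norm // mulr_ge0.
  - rewrite floorK // addrAC subrr add0r normrM normrX normrN normr1 expr1n mul1r.
    rewrite ger0_norm; last exact: mulr_ge0.
    have := ler_wpM2l hc h4; rewrite e0 => HH; exact: le_trans HH hQh.
rewrite tE -e0 -e1 -e2; split.
- by rewrite -mulrBr; apply: ler_wpM2l.
- by rewrite -mulrBr -mulrDr; apply: ler_wpM2l.
Qed.

Lemma inv2Q (R : realType) (Qn : nat) : ((2 * Qn)%:R : R)^-1 = 2^-1 * (Qn%:R)^-1.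
Proof. by rewrite natrM invfM. Qed.

Lemma F1 (R : realType) u ns : a_sequence u -> admissible R u ns ->
  forall (Qn : nat), (2 <= Qn)%N -> (forall k, aratio u (ns k) = Qn) ->
  forall k, ((2 * Qn)%:R : R)^-1 < tnorm ((u_pred u (ns k))%:R * xS R u ns).
Proof.
move=> hu ha Qn hQ2 hQ k.
have [l _] := LB hu ha hQ2 hQ k.
apply: lt_le_trans l.
have hb := @P1_bound u hu (ns k) (ns k.+1) (proj2 ha k).
rewrite !hQ in hb.
have hP : ((\prod_(ns k <= i < (ns k.+1).+1) aratio u i)%:R : R)^-1 < ((2 * Qn)%:R)^-1.
  have P0 := @prod_ge1 u hu (ns k) (ns k.+1).+1.
  rewrite ltf_pV2 ?posrE ?ltr0n ?P0 //; last by lia.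
  rewrite ltr_nat; apply: leq_trans hb.
  have h2 : (2 <= 2 ^ (ns k.+1 - ns k).-1)%N.
    have := proj2 ha k => hk.
    rewrite -[X in (X <= _)%N]expn1 leq_exp2l //; lia.
  apply: (@leq_trans (Qn * Qn * 2)); first by nia.
  by rewrite leq_mul2l h2 orbT.
move: hP; rewrite !inv2Q => hP.
have hq : 0 < (Qn%:R : R)^-1 by rewrite invr_gt0 ltr0n; lia.
lra.
Qed.

Lemma F2 (R : realType) u ns : a_sequence u -> admissible R u ns ->
  forall (Qn : nat), (forall k, aratio u (ns k) = Qn) ->
  forall m, (0 < m \/ 2 <= aratio u m)%N -> (forall j, ns j <> m) ->
  tnorm ((u_pred u m)%:R * xS R u ns) <= ((2 * Qn)%:R : R)^-1.
Proof.
move=> hu ha Qn hQ m hm hn.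
have ex : exists j, (m < ns j)%N by exists m.+1; have := ns_ge ha m.+1; lia.
case: (ex_minnP ex) => j0 hj0 hmin.
have hj : forall j, (j < j0)%N -> (ns j < m)%N.
  move=> j hj; have := hn j; case: (ltnP (ns j) m) => // h1 h2.
  have := hmin j; rewrite ltn_neqAle h1 andbT.
  have -> : (m != ns j) by apply/eqP => e; apply: h2; rewrite e.
  by move=> /(_ isT); lia.
apply: le_trans (UB hu ha hj (ltnW hj0)) _.
have P0 := @prod_ge1 u hu m (ns j0).+1.
have Q0 : (0 < Qn)%N by rewrite -(hQ 0%N); apply: a_ratio_pos.
rewrite lef_pV2 ?posrE ?ltr0n ?P0 ?muln_gt0 ?Q0 //.
rewrite ler_nat -(hQ j0); exact: P2_bound.
Qed.


Lemma u_strict u : a_sequence u -> forall a b, (a < b)%N -> (u a < u b)%N.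
Proof.
move=> hu a b /subnK <-; elim: (b - a.+1)%N => [|n IH].
  by rewrite add0n; case: hu => _ [hi _].
by rewrite addSn; apply: ltn_trans IH _; case: hu => _ [hi _].
Qed.

Lemma x_in01 (R : realType) u ns : a_sequence u -> admissible R u ns ->
  0 < xS R u ns < 1.
Proof.
move=> hu ha.
have [h1 h2 _ _] := ts_bounds hu ha 0%N.
have e : ts R u ns 0 = xS R u ns by rewrite /ts /Ss /series /= big_geq // subr0 expr0 mul1r.
rewrite e in h1 h2.
have s01 : fs R u ns 1 < fs R u ns 0.
  rewrite /fs ltf_pV2 ?posrE ?ltr0n ?a_pos // ltr_nat; apply: u_strict => //.
  exact: (ns_lt ha (ltnSn 0)).
have s12 : fs R u ns 2 < fs R u ns 1.
  rewrite /fs ltf_pV2 ?posrE ?ltr0n ?a_pos // ltr_nat; apply: u_strict => //.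
  exact: (ns_lt ha (ltnSn 1)).
have f01 : fs R u ns 0 <= 1.
  rewrite /fs invf_le1 ?ltr0n ?a_pos // ler1n; exact: a_pos.
apply/andP; split; lra.
Qed.

Lemma sub_range (R : realType) u ns ns' : a_sequence u -> admissible R u ns ->
  admissible R u ns' -> forall Qn : nat, (2 <= Qn)%N ->
  (forall k, aratio u (ns k) = Qn) -> (forall k, aratio u (ns' k) = Qn) ->
  xS R u ns = xS R u ns' -> forall k, exists j, ns' j = ns k.
Proof.
move=> hu ha ha' Qn hQ2 hQ hQ' exx k.
case: (pselect (exists j, ns' j = ns k)) => // hn.
exfalso.
have hn' : forall j, ns' j <> ns k by move=> j e; apply: hn; exists j.
have h1 := F1 hu ha hQ2 hQ k.
have h2 := F2 hu ha' hQ' (or_intror (eq_ind_r (fun q => (2 <= q)%N) hQ2 (hQ k))) hn'.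
rewrite -exx in h2; lra.
Qed.

Unset Implicit Arguments.
Set Strict Implicit.
Local Close Scope classical_set_scope.

Theorem mainTheorem5 (R : realType) (u : nat -> nat) (ns : nat -> nat) :
  a_sequence u ->
  (q_limsup R u < +oo)%E ->
  admissible R u ns ->
  let Q : R := fine (q_limsup R u) in
  let x : R := xS R u ns in
  let qr := fun i => ((aratio u i)%:R : R) in
  (* (a) *)
  (forall k,
     (forall m, (ns k <= m < ns k.+1)%N ->
        tnorm ((u_pred u m)%:R * x) <= tnorm ((u_pred u (ns k))%:R * x)) /\
     (Q^-1 - (2 ^+ (ns k.+1 - ns k).-1 * Q ^+ 2)^-1
        <= (qr (ns k))^-1 - (\prod_(ns k <= i < (ns k.+1).+1) qr i)^-1) /\
     ((qr (ns k))^-1 - (\prod_(ns k <= i < (ns k.+1).+1) qr i)^-1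
        <= tnorm ((u_pred u (ns k))%:R * x)) /\
     (tnorm ((u_pred u (ns k))%:R * x)
        <= (qr (ns k))^-1 - (\prod_(ns k <= i < (ns k.+1).+1) qr i)^-1
           + (\prod_(ns k <= i < (ns k.+2).+1) qr i)^-1)) /\
  (* (b) *)
  rho u x 0 = Num.max (tnorm x)
                (sup (range (fun k => tnorm ((u_pred u (ns k))%:R * x)))) /\
  (* (c) *)
  (forall ns' : nat -> nat, admissible R u ns' -> range ns' <> range ns ->
     forall z : int, x - xS R u ns' != z%:~R).
Proof.
move=> hu _ ha Q x qr.
have [Qn [hQ2 QE hQ]] := Q_facts hu ha.
have QnE : Q = Qn%:R by rewrite /Q QE.
have hQpos : (0 < Qn)%N by lia.
have prE : forall a b, \prod_(a <= i < b) qr i = (\prod_(a <= i < b) aratio u i)%:R.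
  by move=> a b; rewrite natr_prod.
have F1' := F1 hu ha hQ2 hQ.
split; [|split].
-
  move=> k; have [l1 l2] := LB hu ha hQ2 hQ k.
  rewrite !prE /qr hQ; split; [|split; [|split]] => //.
  + move=> m /andP[h1 h2]; rewrite leq_eqVlt in h1; case/orP: h1 => [/eqP <- //|h1].
    have hj : forall j, (j < k.+1)%N -> (ns j < m)%N.
      move=> j hj; apply: leq_ltn_trans h1; exact: (ns_le ha (hj : (j <= k)%N)).
    apply: le_trans (UB hu ha hj (ltnW h2)) _.
    apply: le_trans (ltW (F1' k)).
    have P0 := @prod_ge1 u hu m (ns k.+1).+1.
    rewrite lef_pV2 ?posrE ?ltr0n ?P0 ?muln_gt0 ?hQpos //.
    rewrite ler_nat -(hQ k.+1); apply: P2_bound => //; first by lia.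
  + have hb := @P1_bound u hu (ns k) (ns k.+1) (proj2 ha k).
    rewrite !hQ in hb.
    rewrite QnE -natrX -natrX -natrM.
    have P0 := @prod_ge1 u hu (ns k) (ns k.+1).+1.
    apply: lerB => //.
    rewrite lef_pV2 ?posrE ?ltr0n ?P0 ?muln_gt0 ?expn_gt0 ?hQpos //.
    by rewrite ler_nat mulnC -mulnn; apply: leq_trans hb; rewrite leqnn.
-
  rewrite /rho.
  rewrite (_ : (fun n => Num.max (tdist x 0) (tdist ((u n)%:R * x) ((u n)%:R * 0)))
     = (fun n => Num.max (tnorm x) (tnorm ((u n)%:R * x)))); last first.
    by apply: funext => n; rewrite /tdist mulr0 !subr0.
  set g := (fun n => Num.max (tnorm x) (tnorm ((u n)%:R * x))).
  set h := (fun k => tnorm ((u_pred u (ns k))%:R * x)).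
  have ubh : has_ubound (range h).
    by exists 2^-1 => _ [k _ <-]; exact: tnorm_le_half.
  have ubg : has_ubound (range g).
    exists 2^-1 => _ [k _ <-]; rewrite /g ge_max !tnorm_le_half //.
  have suph : forall k, h k <= sup (range h).
    by move=> k; apply: ub_le_sup ubh _ _; exists k.
  have supg : forall n, g n <= sup (range g).
    by move=> n; apply: ub_le_sup ubg _ _; exists n.
  apply: le_anti; apply/andP; split.
  + apply: ge_sup; first by exists (g 0%N); exists 0%N.
    move=> _ [n _ <-]; rewrite /g ge_max le_max lexx /=.
    rewrite le_max; apply/orP; right.
    case: (pselect (exists k, ns k = n.+1)) => [[k hk]|hn].
    * by have := suph k; rewrite /h hk.
    * have hn' : forall j, ns j <> n.+1 by move=> j e; apply: hn; exists j.
      have := F2 hu ha hQ (or_introl (ltn0Sn n)) hn' => /= H.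
      apply: le_trans H _; apply: le_trans (ltW (F1' 0%N)) _; exact: suph.
  + rewrite ge_max; apply/andP; split.
    * by apply: le_trans (supg 0%N); rewrite /g le_max lexx.
    * apply: ge_sup; first by exists (h 0%N); exists 0%N.
      move=> _ [k _ <-]; rewrite /h; case: (ns k) => [|n] /=.
      - by rewrite mulr1n mul1r; apply: le_trans (supg 0%N); rewrite /g le_max lexx.
      - by apply: le_trans (supg n); rewrite /g le_max lexx orbT.
-
  move=> ns' ha' hr z; apply/negP => /eqP hz.
  have [Qn' [hQ2' QE' hQ']] := Q_facts hu ha'.
  have eQ : Qn' = Qn by apply/eqP; rewrite -(eqr_nat R) -QE -QE'.
  rewrite eQ in hQ'.
  have /andP[x0 x1] := x_in01 hu ha; have /andP[y0 y1] := x_in01 hu ha'.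
  have z0 : z = 0.
    have a1 : (-1 : R) < z%:~R by rewrite -hz /x; lra.
    have a2 : z%:~R < (1 : R) by rewrite -hz /x; lra.
    have : (-1 < z)%R by rewrite -(ltr_int R); exact: a1.
    have : (z < 1)%R by rewrite -(ltr_int R); exact: a2.
    lia.
  have {}hz : x = xS R u ns' by apply/eqP; rewrite -subr_eq0 hz z0.
  apply: hr; apply/seteqP; split => n [k _ <-].
  + have [j hj] := sub_range hu ha' ha hQ2 hQ' hQ (esym hz) k; by exists j.
  + have [j hj] := sub_range hu ha ha' hQ2 hQ hQ' hz k; by exists j.
Qed.
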